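(* For every integer $n\ge 3$, $$d_3(n)=\begin{cases} n+\tfrac13 n & \text{if } n\equiv 0 \pmod 6,\\ n-\tfrac16 (n-1) & \text{if } n\equiv 1 \pmod 6,\\ n+\tfrac13 (n-2) & \text{if } n\equiv 2 \pmod 6,\\ n-\tfrac13 n & \text{if } n\equiv 3 \pmod 6,\\ n+\tfrac13 (n+2) & \text{if } n\equiv 4 \pmod 6,\\ n-\tfrac16 (n+1) & \text{if } n\equiv 5 \pmod 6.\end{cases}$$
   Context: A Mondrian partition of an $n\times n$ square ($n$ a positive integer) is a dissection of the square into $k\ge 2$ non-overlapping rectangles with positive integer side lengths which are pairwise non-congruent (rectangles of dimensions $a\times b$ and $b\times a$ count as congruent). Its defect is the difference between the largest and the smallest area among its rectangles. For $k\ge 2$, $d_k(n)$ denotes the minimum defect over all Mondrian partitions of the $n\times n$ square using exactly $k$ rectangles. *)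

(* Defs.v *)
From mathcomp Require Import all_boot.
Set Implicit Arguments. Unset Strict Implicit. Unset Printing Implicit Defensive.

(* A rectangle placed in the n x n square with integer corner coordinates:
   (x, y, w, h) occupies [x, x+w] x [y, y+h]. *)
Definition rect := (nat * nat * nat * nat)%type.
Definition rx (r : rect) : nat := r.1.1.1.
Definition ry (r : rect) : nat := r.1.1.2.
Definition rw (r : rect) : nat := r.1.2.
Definition rh (r : rect) : nat := r.2.

Definition area (r : rect) : nat := rw r * rh r.

Definition rect_in (n : nat) (r : rect) : bool :=
  [&& 0 < rw r, 0 < rh r, rx r + rw r <= n & ry r + rh r <= n].

(* the unit cell [i,i+1] x [j,j+1] lies in r *)
Definition covers (r : rect) (i j : nat) : bool :=
  [&& rx r <= i, i < rx r + rw r, ry r <= j & j < ry r + rh r].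

Definition congruent (r s : rect) : bool :=
  ((rw r == rw s) && (rh r == rh s)) || ((rw r == rh s) && (rh r == rw s)).

(* Mondrian partition of the n x n square into exactly k rectangles (k >= 2):
   rectangles inside the square, every unit cell covered exactly once
   (i.e. non-overlapping and covering the square), pairwise non-congruent. *)
Definition mondrian (n k : nat) (s : seq rect) : Prop :=
  [/\ 2 <= k, size s = k, all (rect_in n) s,
      (forall i j, i < n -> j < n -> count (fun r => covers r i j) s = 1)
    & pairwise (fun r t => ~~ congruent r t) s].

Definition max_area (s : seq rect) : nat := \max_(r <- s) area r.
Definition min_area (s : seq rect) : nat := \big[minn/max_area s]_(r <- s) area r.
Definition defect (s : seq rect) : nat := max_area s - min_area s.

Definition is_dk (k n m : nat) : Prop :=
  (exists s, mondrian n k s /\ defect s = m) /\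
  (forall s, mondrian n k s -> m <= defect s).

(* the claimed value of d_3(n) (all divisions are exact in each case) *)
Definition d3_formula (n : nat) : nat :=
  match n %% 6 with
  | 0 => n + n %/ 3
  | 1 => n - (n - 1) %/ 6
  | 2 => n + (n - 2) %/ 3
  | 3 => n - n %/ 3
  | 4 => n + (n + 2) %/ 3
  | _ => n - (n + 1) %/ 6
  end.

(* Main.v *)
Require Import Defs.
From mathcomp Require Import all_boot zify.
Definition G f n a m w c := f + w*m <= n*a \/ f + w*m <= c*m \/ f + n*a <= c*m.
Lemma sec t0 f n a m w c : w + t0 <= c -> f <= t0 * m -> G f n a m w c.
Proof. move=> h1 h2; right; left. have : (w+t0)*m <= c*m by apply: leq_mul. nia. Qed.
Lemma fst W f n a m w c : w <= W -> f + W*m <= n*a -> G f n a m w c.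
Proof. move=> h1 h2; left. have : w*m <= W*m by apply: leq_mul. nia. Qed.
Lemma thd f n a m w c : f + n*a <= c*m -> G f n a m w c.
Proof. by right; right. Qed.

Lemma r0 k a m w c : 0 < k -> 0 < a -> 0 < m -> a + m = 6*k -> 0 < w -> w < c -> w + c = 6*k ->
  G (8*k) (6*k) a m w c.
Proof.
move=> *.
have [ha|ha] : a <= 2*k \/ 2*k+1 <= a by lia.
- apply: (sec 2); nia.
- apply: (fst (3*k-1)). lia. have -> : a = 2*k+1 + (a - (2*k+1)) by lia. nia.
Qed.
Lemma r1 k a m w c : 0 < k -> 0 < a -> 0 < m -> a + m = 6*k+1 -> 0 < w -> w < c -> w + c = 6*k+1 ->
  G (5*k+1) (6*k+1) a m w c.
Proof.
move=> *.
have [hw|hw] : w = 3*k \/ w <= 3*k-1 by lia.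
- have hc : c = 3*k+1 by lia. subst.
  have [ha|ha] : a <= 2*k \/ 2*k+1 <= a by lia.
  + apply: thd. nia.
  + apply: (fst (3*k)) => //. nia.
- have [hm|hm] : 5*k+1 <= 3*m \/ 3*m <= 5*k by lia.
  + apply: (sec 3); lia.
  + apply: (fst (3*k-1)) => //. nia.
Qed.
Lemma r2 k a m w c : 0 < a -> 0 < m -> a + m = 6*k+2 -> 0 < w -> w < c -> w + c = 6*k+2 ->
  G (8*k+2) (6*k+2) a m w c.
Proof.
move=> *.
have [ha|ha] : a <= 2*k+1 \/ 2*k+2 <= a by lia.
- apply: (sec 2); nia.
- apply: (fst (3*k)). lia. nia.
Qed.
Lemma r3 k a m w c : 0 < a -> 0 < m -> a + m = 6*k+3 -> 0 < w -> w < c -> w + c = 6*k+3 ->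
  G (4*k+2) (6*k+3) a m w c.
Proof.
move=> *.
have [ha|ha] : a <= 2*k+1 \/ 2*k+2 <= a by lia.
- apply: (sec 1); nia.
- apply: (fst (3*k+1)). lia. nia.
Qed.
Lemma r4 k a m w c : 0 < a -> 0 < m -> a + m = 6*k+4 -> 0 < w -> w < c -> w + c = 6*k+4 ->
  G (8*k+6) (6*k+4) a m w c.
Proof.
move=> *.
have [ha|ha] : a <= 2*k+1 \/ 2*k+2 <= a by lia.
- apply: (sec 2); nia.
- apply: (fst (3*k+1)). lia. nia.
Qed.
Lemma r5 k a m w c : 0 < a -> 0 < m -> a + m = 6*k+5 -> 0 < w -> w < c -> w + c = 6*k+5 ->
  G (5*k+4) (6*k+5) a m w c.
Proof.
move=> *.
have [hw|hw] : w = 3*k+2 \/ w <= 3*k+1 by lia.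
- have hc : c = 3*k+3 by lia. subst.
  have [ha|ha] : a <= 2*k+1 \/ 2*k+2 <= a by lia.
  + apply: thd. nia.
  + apply: (fst (3*k+2)) => //. nia.
- have [hm|hm] : 5*k+4 <= 3*m \/ 3*m <= 5*k+3 by lia.
  + apply: (sec 3); lia.
  + apply: (fst (3*k+1)) => //. nia.
Qed.
Definition D3 (x y z : nat) := maxn x (maxn y z) - minn x (minn y z).

Lemma Gimp f X Y Z : Y <= Z -> (f + Y <= X \/ f + Y <= Z \/ f + X <= Z) -> f <= D3 X Y Z.
Proof. rewrite /D3; lia. Qed.

Lemma d3E n : exists k, 
  (n = 6*k /\ d3_formula n = 8*k) \/ (n = 6*k+1 /\ d3_formula n = 5*k+1) \/
  (n = 6*k+2 /\ d3_formula n = 8*k+2) \/ (n = 6*k+3 /\ d3_formula n = 4*k+2) \/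
  (n = 6*k+4 /\ d3_formula n = 8*k+6) \/ (n = 6*k+5 /\ d3_formula n = 5*k+4).
Proof.
exists (n %/ 6). have hn := divn_eq n 6. have hr : n %% 6 < 6 by rewrite ltn_pmod.
rewrite /d3_formula. move: hn hr. case E: (n %% 6) => [|[|[|[|[|[|r]]]]]] hn hr.
- left; lia.
- right; left; lia.
- do 2 right; left; lia.
- do 3 right; left; lia.
- do 4 right; left; lia.
- do 5 right; lia.
- lia.
Qed.

Lemma d3_le2n n : d3_formula n <= 2 * n.
Proof. have [k [[-> ->]|[[-> ->]|[[-> ->]|[[-> ->]|[[-> ->]|[-> ->]]]]]]] := d3E n; lia. Qed.

Lemma Lstrip n a p q : 0 < a -> 0 < p -> 0 < q -> a <> p -> a <> q -> p <> q ->
  d3_formula n <= D3 (n*a) (n*p) (n*q).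
Proof.
move=> *. apply: leq_trans (d3_le2n n) _. rewrite /D3.
have [h|[h|[h|[h|[h|h]]]]] : (a + 2 <= q /\ a <= p /\ p <= q) \/ (a + 2 <= p /\ a <= q /\ q <= p) \/
  (p + 2 <= q /\ p <= a /\ a <= q) \/ (p + 2 <= a /\ p <= q /\ q <= a) \/
  (q + 2 <= a /\ q <= p /\ p <= a) \/ (q + 2 <= p /\ q <= a /\ a <= p).
  lia.
all: case: h => h1 [h2 h3]; have := leq_mul (leqnn n) h1; have := leq_mul (leqnn n) h2;
  have := leq_mul (leqnn n) h3; lia.
Qed.

Lemma LarithL n a m w c : 3 <= n -> 0 < a -> 0 < m -> a + m = n -> 0 < w -> w < c -> w + c = n ->
  d3_formula n <= D3 (n*a) (w*m) (c*m).
Proof.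
move=> h3 ha hm ham hw hwc hwcn.
apply: Gimp; first exact: leq_mul (ltnW hwc) (leqnn m).
have [k [[e ->]|[[e ->]|[[e ->]|[[e ->]|[[e ->]|[e ->]]]]]]] := d3E n; rewrite e in ham hwcn h3 *.
- apply: r0 => //; lia.
- apply: r1 => //; lia.
- exact: r2.
- exact: r3.
- exact: r4.
- exact: r5.
Qed.

Lemma Larith n a m w c : 3 <= n -> 0 < a -> 0 < m -> a + m = n -> 0 < w -> 0 < c -> w + c = n -> w <> c ->
  d3_formula n <= D3 (n*a) (w*m) (c*m).
Proof.
move=> h3 ha hm ham hw hc hwcn hne.
have [hlt|hlt] : w < c \/ c < w by lia.
- exact: LarithL.
- have -> : D3 (n*a) (w*m) (c*m) = D3 (n*a) (c*m) (w*m) by rewrite /D3; lia.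
  apply: LarithL => //; lia.
Qed.

Definition good n (r1 r2 r3 : rect) :=
  [/\ rect_in n r1, rect_in n r2, rect_in n r3,
      (forall i j, i < n -> j < n -> covers r1 i j + covers r2 i j + covers r3 i j = 1) &
      (~~ congruent r1 r2 /\ ~~ congruent r1 r3 /\ ~~ congruent r2 r3)].

Lemma Core2 n r1 r2 r3 : 3 <= n -> good n r1 r2 r3 -> rx r1 = 0 -> ry r1 = 0 -> rw r1 = n ->
  covers r2 0 (rh r1) -> d3_formula n <= D3 (area r1) (area r2) (area r3).
Proof.
case: r1 => [[[x1 y1] w1] a]; case: r2 => [[[x2 y2] w2] h2]; case: r3 => [[[x3 y3] w3] h3].
rewrite /good /rect_in /covers /area /congruent /rx /ry /rw /rh /=.
move=> hn [i1 i2 i3 cov [n12 [n13 n23]]] ex1 ey1 ew1 c0.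
move/and4P: i1 => [i1a i1b i1c i1d]. move/and4P: i2 => [i2a i2b i2c i2d]. move/and4P: i3 => [i3a i3b i3c i3d].
move/and4P: c0 => [c0a c0b c0c c0d].
subst x1 y1 w1.
Time have hx2 : x2 = 0 by clear -c0a; lia. subst x2.
have c2 := cov 0 y2 ltac:(clear -hn i1b i1d i2a i2b i2c i2d i3a i3b i3c i3d ; lia) ltac:(clear -hn i1b i1d i2a i2b i2c i2d i3a i3b i3c i3d ; lia).
Time have hy2 : y2 = a by clear -c2 c0c i1b i2a i2b hn; lia.
subst y2.
have c3 := cov x3 y3 ltac:(clear -hn i1b i1d i2a i2b i2c i2d i3a i3b i3c i3d ; lia) ltac:(clear -hn i1b i1d i2a i2b i2c i2d i3a i3b i3c i3d ; lia).
Time have y3a : a <= y3 by clear -c3 hn i1b i1d i2a i2b i2c i2d i3a i3b i3c i3d; lia.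
have c33 := cov (n-1) (n-1) ltac:(clear -hn i1b i1d i2a i2b i2c i2d i3a i3b i3c i3d ; lia) ltac:(clear -hn i1b i1d i2a i2b i2c i2d i3a i3b i3c i3d ; lia).
Time have hr3 : x3 + w3 = n /\ y3 + h3 = n by clear -c33 c3 y3a i2a i2b i2c i2d i3a i3b i3c i3d hn; lia.
Time have [hw2|[hh2|hbad]] : (w2 = n /\ a + h2 < n) \/ (w2 < n /\ a + h2 = n) \/ (w2 < n /\ a + h2 < n).
  clear -c33 hr3 i2a i2b i2c i2d i3a i3b i3c i3d hn y3a; lia.
-
  have c6 := cov 0 (a+h2) ltac:(clear -hn i1b i1d i2a i2b i2c i2d i3a i3b i3c i3d ; lia) ltac:(clear -hn i1b i1d i2a i2b i2c i2d i3a i3b i3c i3d hw2; lia).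
  Time have e3 : x3 = 0 /\ y3 = a + h2 by clear -c6 c3 hw2 hr3 y3a i3a i3b i3c i3d i2b i2d i1b; lia.
  have -> : w3 = n by clear -hr3 e3; lia. have hw2n : w2 = n by case: hw2.
  rewrite hw2n.
  Time apply: Lstrip; clear -n12 n13 n23 hr3 e3 hw2n hn i1b i1d i2a i2b i2c i2d i3a i3b i3c i3d; lia.
- have c7 := cov w2 a ltac:(clear -hn i1b i1d i2a i2b i2c i2d i3a i3b i3c i3d hh2; lia) ltac:(clear -hn i1b i1d i2a i2b i2c i2d i3a i3b i3c i3d hh2; lia).
  Time have e3 : x3 = w2 /\ y3 = a by clear -c7 c3 hh2 hr3 y3a i3a i3b i3c i3d i2a i2b i1b; lia.
  have -> : h3 = h2 by clear -hr3 e3 hh2; lia.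
  Time apply: Larith; clear -n23 hr3 e3 hh2 hn i1b i1d i2a i2b i2c i2d i3a i3b i3c i3d; lia.
- have c4 := cov (n-1) a ltac:(clear -hn i1b i1d i2a i2b i2c i2d i3a i3b i3c i3d ; lia) ltac:(clear -hn i1b i1d i2a i2b i2c i2d i3a i3b i3c i3d hbad; lia).
  have c5 := cov 0 (n-1) ltac:(clear -hn i1b i1d i2a i2b i2c i2d i3a i3b i3c i3d ; lia) ltac:(clear -hn i1b i1d i2a i2b i2c i2d i3a i3b i3c i3d ; lia).
  Time clear -c4 c5 c3 hbad hr3 y3a i3a i3b i3c i3d i2a i2b hn; lia.
Qed.
Definition tr (r : rect) : rect := (ry r, rx r, rh r, rw r).
Definition fl n (r : rect) : rect := (rx r, n - ry r - rh r, rw r, rh r).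
Lemma cov_fl n r i j : rect_in n r -> j < n -> covers (fl n r) i j = covers r i (n - 1 - j).
Proof.
case: r => [[[x y] w] h]; rewrite /rect_in /covers /fl /rx /ry /rw /rh /= => /and4P [h1 h2 h3 h4] hj.
by apply/and4P/and4P => -[? ? ? ?]; split; lia.
Qed.
Lemma in_fl n r : rect_in n r -> rect_in n (fl n r).
Proof. case: r => [[[x y] w] h]; rewrite /rect_in /fl /rx /ry /rw /rh /=; lia. Qed.
Lemma cov_tr r i j : covers (tr r) i j = covers r j i.
Proof. case: r => [[[x y] w] h]; rewrite /covers /tr /rx /ry /rw /rh /=; lia. Qed.
Lemma in_tr n r : rect_in n r -> rect_in n (tr r).
Proof. case: r => [[[x y] w] h]; rewrite /rect_in /tr /rx /ry /rw /rh /=; lia. Qed.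
Lemma cong_tr r s : congruent (tr r) (tr s) = congruent r s.
Proof. case: r => [[[x y] w] h]; case: s => [[[x' y'] w'] h']; rewrite /congruent /tr /rx /ry /rw /rh /=; lia. Qed.

Lemma good_fl n r1 r2 r3 : good n r1 r2 r3 -> good n (fl n r1) (fl n r2) (fl n r3).
Proof.
case=> i1 i2 i3 cov nc; split => //; try exact: in_fl.
move=> i j hi hj; rewrite !cov_fl //; apply: cov => //; lia.
Qed.
Lemma good_tr n r1 r2 r3 : good n r1 r2 r3 -> good n (tr r1) (tr r2) (tr r3).
Proof.
case=> i1 i2 i3 cov nc; split => //; try exact: in_tr.
- move=> i j hi hj; rewrite !cov_tr; exact: cov.
- by rewrite !cong_tr.
Qed.
Lemma D3_12 x y z : D3 x y z = D3 y x z. Proof. rewrite /D3; lia. Qed.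
Lemma D3_23 x y z : D3 x y z = D3 x z y. Proof. rewrite /D3; lia. Qed.

Lemma good12 n r1 r2 r3 : good n r1 r2 r3 -> good n r2 r1 r3.
Proof.
case=> i1 i2 i3 cov [a [b c]]; split => //.
- move=> i j hi hj; have := cov i j hi hj; clear; lia.
- rewrite /congruent in a b c *; split; [lia | split; lia].
Qed.
Lemma good23 n r1 r2 r3 : good n r1 r2 r3 -> good n r1 r3 r2.
Proof.
case=> i1 i2 i3 cov [a [b c]]; split => //.
- move=> i j hi hj; have := cov i j hi hj; clear; lia.
- rewrite /congruent in a b c *; split; [lia | split; lia].
Qed.

Lemma own (b1 b2 b3 : bool) : b1 + b2 + b3 = 1 ->
  (b1 /\ ~~ b2 /\ ~~ b3) \/ (~~ b1 /\ b2 /\ ~~ b3) \/ (~~ b1 /\ ~~ b2 /\ b3).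
Proof. by case: b1; case: b2; case: b3; auto. Qed.

Lemma Core n r1 r2 r3 : 3 <= n -> good n r1 r2 r3 -> covers r1 0 0 -> covers r1 (n-1) 0 ->
  d3_formula n <= D3 (area r1) (area r2) (area r3).
Proof.
move=> hn g c00 c10.
have g' := g. case: g' => i1 i2 i3 cov _.
have [ex1 [ey1 ew1]] : rx r1 = 0 /\ ry r1 = 0 /\ rw r1 = n.
  move: hn i1 c00 c10; rewrite /rect_in /covers; clear; lia.
have ha : rh r1 < n.
  have c2 : covers r2 (rx r2) (ry r2).
    move: i2; rewrite /rect_in /covers; clear; lia.
  have := cov (rx r2) (ry r2) ltac:(move: i2; rewrite /rect_in; clear; lia) ltac:(move: i2; rewrite /rect_in; clear; lia).
  move: c2 i2 ex1 ey1 ew1; rewrite /rect_in /covers; clear; lia.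
have := @own _ _ _ (cov 0 (rh r1) ltac:(clear -hn; lia) ha).
have nc1 : ~~ covers r1 0 (rh r1) by rewrite /covers; clear -ey1; lia.
rewrite (negbTE nc1) /=; case=> [[//]|[[_ [h2 _]]|[_ [_ h3]]]].
- exact: Core2.
- rewrite D3_23; apply: Core2 => //; exact: good23.
Qed.
Arguments good_fl {n r1 r2 r3}. Arguments good_tr {n r1 r2 r3}.
Arguments good12 {n r1 r2 r3}. Arguments good23 {n r1 r2 r3}.
Lemma area_tr r : area (tr r) = area r. Proof. by rewrite /area /tr /rw /rh /= mulnC. Qed.
Lemma area_fl n r : area (fl n r) = area r. Proof. by []. Qed.

Lemma PairT n r1 r2 r3 : 3 <= n -> good n r1 r2 r3 -> covers r1 0 (n-1) -> covers r1 (n-1) (n-1) ->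
  d3_formula n <= D3 (area r1) (area r2) (area r3).
Proof.
move=> hn g ca cb. have g' := good_fl g. case: (g) => i1 _ _ _ _.
rewrite -(area_fl n r1) -(area_fl n r2) -(area_fl n r3).
apply: Core => //; rewrite cov_fl //; try (clear -hn; lia); by rewrite subn0.
Qed.

Lemma PairL n r1 r2 r3 : 3 <= n -> good n r1 r2 r3 -> covers r1 0 0 -> covers r1 0 (n-1) ->
  d3_formula n <= D3 (area r1) (area r2) (area r3).
Proof.
move=> hn g ca cb. have g' := good_tr g.
rewrite -(area_tr r1) -(area_tr r2) -(area_tr r3).
by apply: Core => //; rewrite cov_tr.
Qed.

Lemma PairR n r1 r2 r3 : 3 <= n -> good n r1 r2 r3 -> covers r1 (n-1) 0 -> covers r1 (n-1) (n-1) ->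
  d3_formula n <= D3 (area r1) (area r2) (area r3).
Proof.
move=> hn g ca cb. have g' := good_tr g.
rewrite -(area_tr r1) -(area_tr r2) -(area_tr r3).
by apply: PairT => //; rewrite cov_tr.
Qed.

Lemma covBB r i j i' j' : covers r i j -> covers r i' j' -> covers r (minn i i') (minn j j').
Proof. rewrite /covers; lia. Qed.
Lemma covBB' r i j i' j' : covers r i j -> covers r i' j' -> covers r (maxn i i') (maxn j j').
Proof. rewrite /covers; lia. Qed.
Lemma covBB2 r i j i' j' : covers r i j -> covers r i' j' -> covers r i j'.
Proof. rewrite /covers; lia. Qed.
Arguments PairT {n r1 r2 r3}. Arguments PairR {n r1 r2 r3}. Arguments PairL {n r1 r2 r3}.
Arguments covBB {r i j i' j'}. Arguments covBB2 {r i j i' j'}.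

Lemma Main1 n r1 r2 r3 : 3 <= n -> good n r1 r2 r3 -> covers r1 0 0 ->
  d3_formula n <= D3 (area r1) (area r2) (area r3).
Proof.
move=> hn g c00. case: (g) => i1 i2 i3 cov _.
have B : n - 1 < n by clear -hn; lia.
have Z : 0 < n by clear -hn; lia.
have o00 := @own _ _ _ (cov 0 0 Z Z).
have o10 := @own _ _ _ (cov (n-1) 0 B Z).
have o01 := @own _ _ _ (cov 0 (n-1) Z B).
have o11 := @own _ _ _ (cov (n-1) (n-1) B B).
case: o10 => [[a _]|[[a1 [a2 a3]]|[a1 [a2 a3]]]]; first exact: Core.
- case: o01 => [[b _]|[[b1 [b2 b3]]|[b1 [b2 b3]]]]; first exact: PairL.
  + have h := covBB a2 b2; rewrite minn0 min0n in h. move: (cov 0 0 Z Z); rewrite c00 h; clear; lia.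
  + case: o11 => [[c1 _]|[[c1 [c2 c3]]|[c1 [c2 c3]]]].
    * have := covBB2 c1 c00. by rewrite (negbTE a1).
    * have := PairR hn (good12 g) a2 c2; rewrite /D3; clear; lia.
    * have := PairT hn (good12 (good23 (good12 g))) b3 c3; rewrite /D3; clear; lia.
- case: o01 => [[b _]|[[b1 [b2 b3]]|[b1 [b2 b3]]]]; first exact: PairL.
  + case: o11 => [[c1 _]|[[c1 [c2 c3]]|[c1 [c2 c3]]]].
    * have := covBB2 c1 c00. by rewrite (negbTE a1).
    * have := PairT hn (good12 g) b2 c2; rewrite /D3; clear; lia.
    * have := PairR hn (good12 (good23 (good12 g))) a3 c3; rewrite /D3; clear; lia.
  + have h := covBB a3 b3; rewrite minn0 min0n in h. move: (cov 0 0 Z Z); rewrite c00 h; clear; lia.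
Qed.
Arguments Main1 {n r1 r2 r3}.

Lemma Main n r1 r2 r3 : 3 <= n -> good n r1 r2 r3 ->
  d3_formula n <= D3 (area r1) (area r2) (area r3).
Proof.
move=> hn g. case: (g) => i1 i2 i3 cov _.
have Z : 0 < n by clear -hn; lia.
case: (@own _ _ _ (cov 0 0 Z Z)) => [[a _]|[[_ [a _]]|[_ [_ a]]]].
- exact: Main1.
- have := Main1 hn (good12 g) a; rewrite /D3; clear; lia.
- have := Main1 hn (good12 (good23 (good12 g))) a; rewrite /D3; clear; lia.
Qed.

Lemma defect3 r1 r2 r3 : defect [:: r1; r2; r3] = D3 (area r1) (area r2) (area r3).
Proof. rewrite /defect /min_area /max_area !big_cons !big_nil /D3; lia. Qed.

Lemma mond_good n r1 r2 r3 : mondrian n 3 [:: r1; r2; r3] -> good n r1 r2 r3.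
Proof.
case=> _ _ /= hin hcov hpw.
move: hin; rewrite andbT => /and3P [i1 i2 i3].
move: hpw => /=; rewrite !andbT => /andP [/andP [a b] c].
split => //.
move=> i j hi hj; have := hcov i j hi hj => /=; rewrite addn0 addnA. done.
Qed.

Lemma lower n s : 3 <= n -> mondrian n 3 s -> d3_formula n <= defect s.
Proof.
move=> hn m. have m' := m. case: m' => _ hs _ _ _.
case: s hs m => [|r1 [|r2 [|r3 [|? ?]]]] //= _ m.
rewrite defect3; apply: Main => //; exact: mond_good.
Qed.

Definition cons3 n a w : seq rect := [:: (0, 0, n, a); (0, a, w, n - a); (w, a, n - w, n - a)].

Lemma cons3_mond n a w : 0 < a < n -> 0 < w < n -> w + w <> n -> mondrian n 3 (cons3 n a w).
Proof.
move=> ha hw hne; split => //.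
- rewrite /= /rect_in /rx /ry /rw /rh /=; lia.
- move=> i j hi hj; rewrite /= /covers /rx /ry /rw /rh /=; lia.
- rewrite /= /congruent /rx /ry /rw /rh /=; lia.
Qed.

Lemma cons3_def n a w : defect (cons3 n a w) = D3 (n * a) (w * (n - a)) ((n - w) * (n - a)).
Proof. by rewrite defect3. Qed.

Lemma upper n : 3 <= n -> exists s, mondrian n 3 s /\ defect s = d3_formula n.
Proof.
move=> hn.
have [k [[e ->]|[[e ->]|[[e ->]|[[e ->]|[[e ->]|[e ->]]]]]]] := d3E n; rewrite e in hn *.
- exists (cons3 (6*k) (2*k) (3*k-1)); split; first (apply: cons3_mond; lia).
  rewrite cons3_def.
  have -> : 6*k - 2*k = 4*k by lia. have -> : 6*k - (3*k-1) = 3*k+1 by lia.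
  rewrite /D3; nia.
- exists (cons3 (6*k+1) (2*k) (3*k)); split; first (apply: cons3_mond; lia).
  rewrite cons3_def.
  have -> : 6*k+1 - 2*k = 4*k+1 by lia. have -> : 6*k+1 - 3*k = 3*k+1 by lia.
  rewrite /D3; nia.
- exists (cons3 (6*k+2) (2*k+1) (3*k)); split; first (apply: cons3_mond; lia).
  rewrite cons3_def.
  have -> : 6*k+2 - (2*k+1) = 4*k+1 by lia. have -> : 6*k+2 - 3*k = 3*k+2 by lia.
  rewrite /D3; nia.
- exists (cons3 (6*k+3) (2*k+1) (3*k+1)); split; first (apply: cons3_mond; lia).
  rewrite cons3_def.
  have -> : 6*k+3 - (2*k+1) = 4*k+2 by lia. have -> : 6*k+3 - (3*k+1) = 3*k+2 by lia.
  rewrite /D3; nia.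
- exists (cons3 (6*k+4) (2*k+1) (3*k+1)); split; first (apply: cons3_mond; lia).
  rewrite cons3_def.
  have -> : 6*k+4 - (2*k+1) = 4*k+3 by lia. have -> : 6*k+4 - (3*k+1) = 3*k+3 by lia.
  rewrite /D3; nia.
- exists (cons3 (6*k+5) (2*k+2) (3*k+2)); split; first (apply: cons3_mond; lia).
  rewrite cons3_def.
  have -> : 6*k+5 - (2*k+2) = 4*k+3 by lia. have -> : 6*k+5 - (3*k+2) = 3*k+3 by lia.
  rewrite /D3; nia.
Qed.

Theorem mainTheorem2 (n : nat) : 3 <= n -> is_dk 3 n (d3_formula n).
Proof.
move=> hn; split; first exact: upper.
move=> s; exact: lower.
Qed.
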